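(* Consider the Accelerated Preference Optimization (APO) procedure described in the context, run with an arbitrary loss function $\ell$, learning rate $\beta>0$ and extrapolation parameter $\alpha>0$, $\alpha\neq 1$. Suppose that for each iteration $t\in\{0,\dots,T\}$ the normalized extrapolated policy $\pi_{t+1}$, i.e. the normalization of $\hat{\pi}_{t+1}(y|x)\cdot\big(\hat{\pi}_{t+1}(y|x)/\hat{\pi}_{t}(y|x)\big)^{\alpha}$, belongs to the policy class $\Pi$. Then for every $t\in\{0,\dots,T\}$, every $x\in\mathcal{X}$ and $y\in\mathcal{Y}$, $$\hat{\pi}_{t+1}(y|x)=\frac{1}{Z_t(x)}\,\pi_{\mathrm{ref}}(y|x)\,\exp\Bigg(\frac{1}{\beta}\sum_{i=0}^{t}\Big(\frac{1}{1-\alpha}-\frac{\alpha^{t+1-i}}{1-\alpha}\Big)\, r_i(x,y)\Bigg),$$ where $r_i(x,y)=\beta\log\hat{\pi}_{i+1}(y|x)-\beta\log\pi_i(y|x)$ is the reparameterized reward at iteration $i$, and $Z_t(x)=\sum_{y}\pi_{\mathrm{ref}}(y|x)\exp\big(\sum_{i=0}^{t}(1/(1-\alpha)-\alpha^{t+1-i}/(1-\alpha))\, r_i(x,y)/\beta\big)$ is the normalizing constant.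
   Context: Let $\mathcal{X}$ (prompts) and $\mathcal{Y}$ (responses) be finite sets and $\rho$ a distribution on $\mathcal{X}$. A policy is a map $\pi:\mathcal{X}\to\Delta(\mathcal{Y})$; $\Pi$ is a class of policies with full support (so all logarithms below are defined). The APO procedure takes a reference policy $\pi_{\mathrm{ref}}\in\Pi$, $\beta>0$, an extrapolation parameter $\alpha$, a number of iterations $T$, a sample size $N$ and a loss $\ell(r,x,y^w,y^l,\pi_t)\in\mathbb{R}$. Initialize $\pi_0=\hat{\pi}_0=\pi_{\mathrm{ref}}$. For $t=0,1,\dots,T$: collect a dataset $\mathcal{D}_t$ of $N$ triples $(x,y^w,y^l)$ with $x\sim\rho$, two responses drawn from $\pi_t(\cdot|x)$, and $y^w,y^l$ the preferred and dispreferred of the two; for $\pi\in\Pi$ set $r_\pi(x,y)=\beta\log\frac{\pi(y|x)}{\pi_t(y|x)}$; set $\hat{\pi}_{t+1}\in\arg\min_{\pi\in\Pi}\frac1N\sum_{(x,y^w,y^l)\in\mathcal{D}_t}\ell(r_\pi,x,y^w,y^l,\pi_t)$; then set $\pi_{t+1}(y|x)=\frac{1}{Z'_t(x)}\hat{\pi}_{t+1}(y|x)\big(\hat{\pi}_{t+1}(y|x)/\hat{\pi}_{t}(y|x)\big)^{\alpha}$ with $Z'_t(x)$ the normalizing constant. The output is $\hat{\pi}_{T+1}$. *)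

(* Defs.v *)
From mathcomp Require Import all_boot all_order all_algebra.
From mathcomp Require Import all_classical all_reals all_analysis.
Set Implicit Arguments. Unset Strict Implicit. Unset Printing Implicit Defensive.
Import Order.TTheory GRing.Theory Num.Theory.
Local Open Scope ring_scope.

Section APO.
Variables (R : realType) (X Y : finType).

Definition policy := X -> Y -> R.

Definition full_support_policy (pi : policy) : Prop :=
  forall x, (forall y, 0 < pi x y) /\ \sum_(y : Y) pi x y = 1.

Definition reparam_reward (beta : R) (pi pit : policy) : X -> Y -> R :=
  fun x y => beta * ln (pi x y / pit x y).

Definition emp_loss (N : nat)
  (l : (X -> Y -> R) -> X -> Y -> Y -> policy -> R)
  (beta : R) (D : seq (X * Y * Y)) (pit pi : policy) : R :=
  N%:R^-1 * \sum_(d <- D) l (reparam_reward beta pi pit) d.1.1 d.1.2 d.2 pit.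

Definition extrapolate (alpha : R) (hnew hold : policy) : policy :=
  fun x y =>
    hnew x y * powR (hnew x y / hold x y) alpha /
    \sum_(y' : Y) hnew x y' * powR (hnew x y' / hold x y') alpha.

Definition iter_reward (beta : R) (hpi pi : nat -> policy) (i : nat) : X -> Y -> R :=
  fun x y => beta * ln (hpi i.+1 x y) - beta * ln (pi i x y).

Definition apo_coef (alpha : R) (t i : nat) : R :=
  (1 - alpha) ^-1 - alpha ^+ (t.+1 - i) / (1 - alpha).

Definition apo_exponent (alpha beta : R) (hpi pi : nat -> policy) (t : nat)
  (x : X) (y : Y) : R :=
  beta^-1 * \sum_(i < t.+1) apo_coef alpha t i * iter_reward beta hpi pi i x y.

Definition apo_Z (alpha beta : R) (pref : policy) (hpi pi : nat -> policy)
  (t : nat) (x : X) : R :=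
  \sum_(y : Y) pref x y * expR (apo_exponent alpha beta hpi pi t x y).

End APO.

(* Main.v *)
Require Import Defs.
From mathcomp Require Import all_boot all_order all_algebra.
From mathcomp Require Import all_classical all_reals all_analysis.
From mathcomp Require Import ring lra.
Import Order.TTheory GRing.Theory Num.Theory.
Local Open Scope ring_scope.

Lemma coef_rec (R : realType) (alpha : R) (Ha : alpha != 1) (t : nat) (Y : Type)
  (f : nat -> R) :
  \sum_(i < t.+2) apo_coef alpha t.+1 i * f i =
  alpha * \sum_(i < t.+1) apo_coef alpha t i * f i + \sum_(i < t.+2) f i.
Proof.
have h1 : 1 - alpha != 0 by rewrite subr_eq0 eq_sym.
rewrite big_ord_recr /= [X in _ = _ + X]big_ord_recr /= addrA; congr (_ + _).
  rewrite mulr_sumr -big_split /=; apply: eq_bigr => i _.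
  have Hi : (i <= t.+1)%N by apply: ltnW; exact: ltn_ord.
  rewrite /apo_coef (subSn Hi) exprS; field; done.
rewrite /apo_coef subSnn expr1; field; done.
Qed.

Lemma key (R : realType) (Y : Type) (alpha : R) (Ha : alpha != 1) (T : nat)
  (a b : nat -> Y -> R) (c : nat -> R)
  (hb0 : forall y, b 0%N y = a 0%N y)
  (hb : forall i, (i <= T)%N -> forall y,
        b i.+1 y = (1 + alpha) * a i.+1 y - alpha * a i y - c i) :
  forall t, (t <= T)%N -> exists K1 K2, forall y,
    \sum_(i < t.+1) (a i.+1 y - b i y) =
       a t.+1 y - alpha * a t y - (1 - alpha) * a 0%N y + K1 /\
    \sum_(i < t.+1) apo_coef alpha t i * (a i.+1 y - b i y) =
       a t.+1 y - a 0%N y + K2.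
Proof.
have h1 : 1 - alpha != 0 by rewrite subr_eq0 eq_sym.
elim=> [|t IH] Ht.
  exists 0, 0 => y; rewrite !big_ord1 hb0 /apo_coef subn0 expr1.
  split; first by ring.
  have -> : (1 - alpha)^-1 - alpha / (1 - alpha) = 1 by field.
  by ring.
have [K1 [K2 HK]] := IH (ltnW Ht).
exists (K1 + c t), (alpha * K2 + K1 + c t) => y.
have [G E] := HK y.
have Hb := hb t (ltnW Ht) y.
have HG : \sum_(i < t.+2) (a i.+1 y - b i y) =
   a t.+2 y - alpha * a t.+1 y - (1 - alpha) * a 0%N y + (K1 + c t).
  rewrite big_ord_recr /= G Hb; ring.
split; first exact: HG.
rewrite (@coef_rec R alpha Ha t Y (fun i => a i.+1 y - b i y)) HG E; ring.
Qed.

Theorem theorem1 (R : realType) (X Y : finType)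
  (Pi : policy R X Y -> Prop)
  (HPi : forall p, Pi p -> full_support_policy p)
  (pref : policy R X Y) (Hpref : Pi pref)
  (beta alpha : R) (Hbeta : 0 < beta) (Halpha : 0 < alpha) (Halpha1 : alpha != 1)
  (T N : nat)
  (l : (X -> Y -> R) -> X -> Y -> Y -> policy R X Y -> R)
  (D : nat -> seq (X * Y * Y)) (HD : forall t, (t <= T)%N -> size (D t) = N)
  (pi hpi : nat -> policy R X Y)
  (Hpi0 : pi 0%N = pref) (Hhpi0 : hpi 0%N = pref)
  (Hhpi_in : forall t, (t <= T)%N -> Pi (hpi t.+1))
  (Hhpi_min : forall t, (t <= T)%N -> forall p, Pi p ->
     emp_loss N l beta (D t) (pi t) (hpi t.+1) <= emp_loss N l beta (D t) (pi t) p)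
  (Hpi_step : forall t, (t <= T)%N -> pi t.+1 = extrapolate alpha (hpi t.+1) (hpi t))
  (Hpi_in : forall t, (t <= T)%N -> Pi (pi t.+1)) :
  forall t, (t <= T)%N -> forall (x : X) (y : Y),
    hpi t.+1 x y =
      (apo_Z alpha beta pref hpi pi t x)^-1 * pref x y *
      expR (apo_exponent alpha beta hpi pi t x y).
Proof.
move=> t Ht x.
have hpos : forall i, (i <= T.+1)%N -> forall y, 0 < hpi i x y.
  case=> [|i] Hi y; first by rewrite Hhpi0; case: (HPi _ Hpref x) => H _; exact: H.
  by case: (HPi _ (Hhpi_in i Hi) x) => H _; exact: H.
pose Zp i := \sum_(y' : Y) hpi i.+1 x y' *
    powR (hpi i.+1 x y' / hpi i x y') alpha.
have Zpos : forall i, (i <= T)%N -> 0 < Zp i.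
  move=> i Hi; rewrite /Zp.
  have y0 : Y.
    case: (HPi _ Hpref x) => _ Hs.
    case: (pickP Y) => [y0 _ //|H0].
    by move: Hs; rewrite big_pred0 // => /eqP; rewrite eq_sym oner_eq0.
  rewrite (bigD1 y0) //=; apply: ltr_pwDl.
    apply: mulr_gt0; first exact: hpos.
    by apply: powR_gt0; apply: divr_gt0; apply: hpos => //; apply: leqW.
  apply: sumr_ge0 => j _; apply: mulr_ge0; first by apply/ltW/hpos.
  exact: powR_ge0.
have hb0 : forall y, ln (pi 0%N x y) = ln (hpi 0%N x y) by move=> y; rewrite Hpi0 Hhpi0.
have hb : forall i, (i <= T)%N -> forall y, ln (pi i.+1 x y) =
    (1 + alpha) * ln (hpi i.+1 x y) - alpha * ln (hpi i x y) - ln (Zp i).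
  move=> i Hi y.
  have h1 : 0 < hpi i.+1 x y by apply: hpos.
  have h0 : 0 < hpi i x y by apply: hpos; apply: leqW.
  have hq : 0 < hpi i.+1 x y / hpi i x y by apply: divr_gt0.
  have hp : 0 < powR (hpi i.+1 x y / hpi i x y) alpha by apply: powR_gt0.
  rewrite (Hpi_step i Hi) /extrapolate -/(Zp i).
  rewrite ln_div ?posrE ?mulr_gt0 ?Zpos // lnM ?posrE // ln_powR ln_div ?posrE //.
  ring.
have [K1 [K2 HK]] := @key R Y alpha Halpha1 T (fun i y => ln (hpi i x y))
  (fun i y => ln (pi i x y)) (fun i => ln (Zp i)) hb0 hb t Ht.
  have Hexp : forall y,
      apo_exponent alpha beta hpi pi t x y =
      \sum_(i < t.+1) apo_coef alpha t i * (ln (hpi i.+1 x y) - ln (pi i x y)).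
    move=> y; rewrite /apo_exponent /iter_reward mulr_sumr; apply: eq_bigr => i _.
    have : beta != 0 by rewrite gt_eqF.
    move=> hbt; field; done.
  have Hh : forall y, hpi t.+1 x y =
      pref x y * expR (apo_exponent alpha beta hpi pi t x y) * expR (- K2).
    move=> y; rewrite Hexp; have [_ ->] := HK y.
    have Hp : pref x y = expR (ln (pref x y)).
      by rewrite lnK // posrE -Hhpi0; apply: hpos.
    rewrite Hhpi0 Hp -!expRD expRK.
    have -> : ln (pref x y) + (ln (hpi t.+1 x y) - ln (pref x y) + K2) + - K2
       = ln (hpi t.+1 x y) by ring.
    by rewrite lnK // posrE; apply: hpos.
  have Hsum : \sum_y hpi t.+1 x y = 1.
    by case: (HPi _ (Hhpi_in t Ht) x).
  have HZ : expR (- K2) = (apo_Z alpha beta pref hpi pi t x)^-1.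
    move: Hsum; rewrite (eq_bigr _ (fun y _ => Hh y)) -mulr_suml -/(apo_Z alpha beta pref hpi pi t x) => H.
    have Hn : apo_Z alpha beta pref hpi pi t x != 0.
      by apply/eqP => H0; move: H; rewrite H0 mul0r => /eqP; rewrite eq_sym oner_eq0.
    by apply: (mulfI Hn); rewrite mulfV // H.
move=> y; rewrite Hh HZ; ring.
Qed.
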